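(* Let $\mathbb D$ be a skew field, $\sigma$ an automorphism of $\mathbb D$, $\delta$ a $\sigma$-derivation, and $R=\mathbb D[x;\sigma,\delta]$. If $f\in R$ is a bounded polynomial of positive degree, then $f$ is irreducible if and only if $\operatorname{End}_R(R/Rf)$ is a skew field.
   Context: $\mathbb D[x;\sigma,\delta]$ is the ring which is a free left $\mathbb D$-module with basis $\{x^n:n\ge0\}$ with $x^nx^m=x^{n+m}$ and $xa=\sigma(a)x+\delta(a)$, where $\delta$ is additive with $\delta(ab)=\sigma(a)\delta(b)+\delta(a)b$. A polynomial $f$ of positive degree is irreducible if $f=ab$ implies $a\in\mathbb D$ or $b\in\mathbb D$. $f$ is bounded if the annihilator $\{r\in R: r(R/Rf)=0\}$ of the left module $R/Rf$ is nonzero. *)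

(* Defs.v *)
From HB Require Import structures.
From mathcomp Require Import all_boot all_order all_algebra.
Set Implicit Arguments. Unset Strict Implicit. Unset Printing Implicit Defensive.
Import GRing.Theory.
Local Open Scope ring_scope.

(* D is a skew field (division ring): every nonzero element is a unit.
   (unitRingType is nontrivial: 1 != 0.) *)
Definition is_skew_field (D : unitRingType) : Prop :=
  forall a : D, a != 0 -> a \is a GRing.unit.

Definition is_sigma_derivation (D : nzRingType) (sigma : D -> D) (delta : D -> D)
  : Prop :=
  (forall a b, delta (a + b) = delta a + delta b) /\
  (forall a b, delta (a * b) = sigma a * delta b + delta a * b).

Definition spoly (D R : nzRingType) (iota : D -> R) (x : R) (c : seq D) : R :=
  \sum_(i < size c) iota c`_i * x ^+ i.

(* R (with embedding iota : D -> R and element x) is D[x; sigma, delta]: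
   R is a free left D-module with basis {x^n : n >= 0}, and
   x a = sigma(a) x + delta(a). *)
Definition is_skew_poly_ring (D R : nzRingType) (sigma delta : D -> D)
  (iota : {rmorphism D -> R}) (x : R) : Prop :=
  [/\ (forall a : D, x * iota a = iota (sigma a) * x + iota (delta a)),
      (forall r : R, exists c : seq D, r = spoly iota x c) &
      (forall c : seq D, spoly iota x c = 0 -> forall i, c`_i = 0)].

Definition has_degree (D R : nzRingType) (iota : D -> R) (x : R) (f : R) (n : nat)
  : Prop :=
  exists c : seq D, [/\ size c = n.+1, c`_n != 0 & f = spoly iota x c].

Definition skew_irreducible (D R : nzRingType) (iota : D -> R) (f : R) : Prop :=
  forall a b : R, f = a * b ->
    (exists d : D, a = iota d) \/ (exists d : D, b = iota d).

Definition inRf (R : nzRingType) (f r : R) : Prop := exists q : R, r = q * f.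

(* f is bounded: the annihilator of the left module R/Rf is nonzero. *)
Definition bounded (R : nzRingType) (f : R) : Prop :=
  exists r : R, r != 0 /\ forall s : R, inRf f (r * s).

(* Endomorphisms of the left R-module R/Rf, represented on representatives:
   g : R -> R well defined, additive and R-linear modulo Rf. *)
Definition is_endo (R : nzRingType) (f : R) (g : R -> R) : Prop :=
  [/\ (forall s s', inRf f (s - s') -> inRf f (g s - g s')),
      (forall s s', inRf f (g (s + s') - (g s + g s'))) &
      (forall r s, inRf f (g (r * s) - r * g s))].

Definition endo_eq (R : nzRingType) (f : R) (g h : R -> R) : Prop :=
  forall s, inRf f (g s - h s).

Definition End_quot_is_skew_field (R : nzRingType) (f : R) : Prop :=
  ~ endo_eq f id (fun _ => 0) /\
  forall g, is_endo f g -> ~ endo_eq f g (fun _ => 0) ->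
    exists h, [/\ is_endo f h, endo_eq f (g \o h) id & endo_eq f (h \o g) id].

(* Main.v *)
Require Import Defs.
From HB Require Import structures.
From mathcomp Require Import all_boot all_order all_algebra.
From Stdlib Require Import Classical_Prop.
Set Implicit Arguments. Unset Strict Implicit. Unset Printing Implicit Defensive.
Import GRing.Theory.
Local Open Scope ring_scope.

Lemma ex_min (Q : nat -> Prop) : (exists k, Q k) ->
  exists k, Q k /\ forall j, (j < k)%N -> ~ Q j.
Proof.
move=> [k Hk].
suff H : forall n k, (k <= n)%N -> Q k -> exists k, Q k /\ forall j, (j < k)%N -> ~ Q j.
  exact: (H k k (leqnn k) Hk).
elim=> [|n IH] k0 Hk0 Q0.
  exists k0; split => // j; move: Hk0; rewrite leqn0 => /eqP ->; by [].
case: (classic (exists j, (j < k0)%N /\ Q j)) => [[j [Hj Qj]]|N].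
  apply: (IH j) => //; rewrite -ltnS; exact: leq_trans Hj Hk0.
exists k0; split => // j Hj Qj; apply: N; by exists j.
Qed.

Section Skew.
Variables (D : unitRingType) (R : nzRingType) (sigma : {rmorphism D -> D})
  (delta : D -> D) (iota : {rmorphism D -> R}) (x : R).
Hypothesis hD : is_skew_field D.
Hypothesis hsig : bijective sigma.
Hypothesis hR : is_skew_poly_ring sigma delta iota x.

Definition inV n (r : R) := exists c : nat -> D, r = \sum_(i < n) iota (c i) * x ^+ i.

Lemma inV0 n : inV n 0.
Proof. exists (fun _ => 0); rewrite big1 // => i _; by rewrite rmorph0 mul0r. Qed.

Lemma inVD n r s : inV n r -> inV n s -> inV n (r + s).
Proof.
move=> [c ->] [d ->]; exists (fun i => c i + d i); rewrite -big_split /=.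
by apply: eq_bigr => i _; rewrite rmorphD mulrDl.
Qed.

Lemma inVN n r : inV n r -> inV n (- r).
Proof.
move=> [c ->]; exists (fun i => - c i); rewrite -sumrN.
by apply: eq_bigr => i _; rewrite rmorphN mulNr.
Qed.

Lemma inVB n r s : inV n r -> inV n s -> inV n (r - s).
Proof. by move=> Hr Hs; apply: inVD => //; apply: inVN. Qed.

Lemma inV_widen m n r : (m <= n)%N -> inV m r -> inV n r.
Proof.
move=> le [c ->]; exists (fun i => if (i < m)%N then c i else 0).
rewrite (big_ord_widen n (fun i => iota (c i) * x ^+ i) le) big_mkcond /=.
by apply: eq_bigr => i _; case: ifP => //; rewrite rmorph0 mul0r.
Qed.

Lemma inVS n r : inV n.+1 r <-> exists u d, inV n u /\ r = u + iota d * x ^+ n.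
Proof.
split.
  move=> [c ->]; exists (\sum_(i < n) iota (c i) * x ^+ i), (c n); split.
    by exists c.
  by rewrite big_ord_recr.
move=> [u [d [[c ->] ->]]]; exists (fun i => if (i < n)%N then c i else d).
rewrite big_ord_recr /= ltnn; congr (_ + _).
by apply: eq_bigr => i _; rewrite ltn_ord.
Qed.

Lemma inV0_eq r : inV 0 r -> r = 0.
Proof. by move=> [c ->]; rewrite big_ord0. Qed.

Lemma mono_inV n i d : (i < n)%N -> inV n (iota d * x ^+ i).
Proof.
move=> lt; apply: (inV_widen lt); apply/inVS; exists 0, d; split; first exact: inV0.
by rewrite add0r.
Qed.

Lemma inV_sum m n (F : 'I_n -> R) : (forall i, inV m (F i)) -> inV m (\sum_(i < n) F i).
Proof.
move=> H; elim/big_ind: _ => //; [exact: inV0 | exact: inVD].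
Qed.

Lemma inV_free n (c : nat -> D) : \sum_(i < n) iota (c i) * x ^+ i = 0 ->
  forall i, (i < n)%N -> c i = 0.
Proof.
move=> H i lt; case: hR => _ _ hfree.
have H' : spoly iota x (mkseq c n) = 0.
  rewrite /spoly size_mkseq -[RHS]H; apply: eq_bigr => j _; by rewrite nth_mkseq.
by have := hfree _ H' i; rewrite nth_mkseq.
Qed.

Lemma inV_all r : exists n, inV n r.
Proof.
case: hR => _ hs _; case: (hs r) => c ->; exists (size c); exists (nth 0 c).
by [].
Qed.


Definition LT (r : R) (a : D) m := inV m (r - iota a * x ^+ m).

Lemma LT_mono a m : LT (iota a * x ^+ m) a m.
Proof. rewrite /LT subrr; exact: inV0. Qed.

Lemma LT_inV r a m : LT r a m -> inV m.+1 r.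
Proof.
move=> H; apply/inVS; exists (r - iota a * x ^+ m), a; split => //.
by rewrite subrK.
Qed.

Lemma LT_nonzero r a m : LT r a m -> inV m r -> a = 0.
Proof.
move=> H1 H2.
have: inV m (iota a * x ^+ m).
  have -> : iota a * x ^+ m = r - (r - iota a * x ^+ m) by rewrite opprB addrC subrK.
  exact: inVB.
move=> [c Hc].
have Hs : \sum_(i < m.+1) iota ((fun i => if (i < m)%N then c i else - a) i) * x ^+ i = 0.
  rewrite big_ord_recr /= ltnn rmorphN mulNr.
  rewrite (eq_bigr (fun i : 'I_m => iota (c i) * x ^+ i)); last by move=> i _; rewrite ltn_ord.
  by rewrite -Hc subrr.
have := @inV_free m.+1 (fun i => if (i < m)%N then c i else - a) Hs m (ltnSn m); rewrite ltnn => /eqP; by rewrite oppr_eq0 => /eqP.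
Qed.

Lemma LT_exists r : r != 0 -> exists a m, a != 0 /\ LT r a m.
Proof.
case: (inV_all r) => n; elim: n r => [|n IH] r H nz.
  by move: nz; rewrite (inV0_eq H) eqxx.
move/inVS: H => [u [d [Hu Hr]]]; subst r.
move: nz; case: (eqVneq d 0) => [->|dnz] nz.
  rewrite rmorph0 mul0r addr0 in nz *; exact: IH.
exists d, n; split => //; rewrite /LT addrK //.
Qed.

Lemma LT_lt r a m n : LT r a m -> a != 0 -> inV n r -> (m < n)%N.
Proof.
move=> H anz Hn; rewrite ltnNge; apply/negP => le.
by move/eqP: anz; apply; apply: (LT_nonzero H); apply: inV_widen Hn.
Qed.

Lemma LT_uniq r a m b k : LT r a m -> a != 0 -> LT r b k -> b != 0 -> m = k.
Proof.
move=> H1 a1 H2 b2; apply/eqP; rewrite eqn_leq.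
by rewrite -ltnS (LT_lt H1 a1 (LT_inV H2)) -ltnS (LT_lt H2 b2 (LT_inV H1)).
Qed.

Lemma LT_ne0 r a m : LT r a m -> a != 0 -> r != 0.
Proof.
move=> H anz; apply/eqP => r0; have := LT_lt H anz; rewrite r0 => /(_ 0%N (inV0 0)).
by [].
Qed.

Lemma inV_iota n d r : inV n r -> inV n (iota d * r).
Proof.
move=> [c ->]; exists (fun i => d * c i); rewrite mulr_sumr.
by apply: eq_bigr => i _; rewrite rmorphM mulrA.
Qed.

Lemma inV_x n r : inV n r -> inV n.+1 (x * r).
Proof.
move=> [c ->]; rewrite mulr_sumr; apply: inV_sum => i.
case: hR => hx _ _.
rewrite mulrA hx mulrDl -mulrA -exprS; apply: inVD; apply: mono_inV => //.
  by rewrite ltnS.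
by apply: ltnW; rewrite ltnS.
Qed.

Lemma inV_xpow n k r : inV n r -> inV (k + n) (x ^+ k * r).
Proof.
move=> H; elim: k => [|k IH]; first by rewrite expr0 mul1r.
by rewrite exprS -mulrA addSn; apply: inV_x.
Qed.

Lemma xk_iota k d : LT (x ^+ k * iota d) (iter k sigma d) k.
Proof.
elim: k => [|k IH]; first by rewrite /LT /= !expr0 mul1r mulr1 subrr; exact: inV0.
rewrite /LT in IH *.
have -> : x ^+ k.+1 * iota d - iota (iter k.+1 sigma d) * x ^+ k.+1 =
  x * (x ^+ k * iota d - iota (iter k sigma d) * x ^+ k) + iota (delta (iter k sigma d)) * x ^+ k.
  case: hR => hx _ _.
  have E : x * (iota (iter k sigma d) * x ^+ k) =
     iota (iter k.+1 sigma d) * x ^+ k.+1 + iota (delta (iter k sigma d)) * x ^+ k.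
    by rewrite mulrA hx mulrDl -mulrA -exprS iterS.
  rewrite mulrBr E mulrA -exprS opprD addrA subrK //.
apply: inVD; first exact: inV_x.
exact: mono_inV.
Qed.

Lemma inV_riota n d r : inV n r -> inV n (r * iota d).
Proof.
move=> [c ->]; rewrite mulr_suml; apply: inV_sum => i.
rewrite -mulrA; apply: inV_iota; apply: inV_widen (LT_inV (xk_iota i d)).
exact: ltn_ord.
Qed.

Lemma inV_rx n r : inV n r -> inV n.+1 (r * x).
Proof.
move=> [c ->]; rewrite mulr_suml; apply: inV_sum => i.
rewrite -mulrA -exprSr; apply: mono_inV; by rewrite ltnS.
Qed.

Lemma inV_rxpow n k r : inV n r -> inV (n + k) (r * x ^+ k).
Proof.
move=> H; elim: k => [|k IH]; first by rewrite expr0 mulr1 addn0.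
by rewrite exprSr mulrA addnS; apply: inV_rx.
Qed.

Lemma inV_mul m n r s : inV m r -> inV n s -> inV (m + n) (r * s).
Proof.
move=> Hr [c ->]; rewrite mulr_sumr; apply: inV_sum => i.
rewrite mulrA; apply: inV_widen (inV_rxpow i (inV_riota (c i) Hr)).
by rewrite leq_add2l ltnW.
Qed.

Lemma LT_mul r a m s b n : LT r a m -> LT s b n ->
  LT (r * s) (a * iter m sigma b) (m + n).
Proof.
rewrite /LT => Hr Hs.
set u := r - iota a * x ^+ m in Hr.
set v := s - iota b * x ^+ n in Hs.
have Hw := xk_iota m b; rewrite /LT in Hw.
set w := x ^+ m * iota b - iota (iter m sigma b) * x ^+ m in Hw.
have -> : r * s - iota (a * iter m sigma b) * x ^+ (m + n) =
  (r * s - r * (iota b * x ^+ n)) + ((r * (iota b * x ^+ n) - iota a * x ^+ m * (iota b * x ^+ n))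
   + (iota a * x ^+ m * (iota b * x ^+ n) - iota (a * iter m sigma b) * x ^+ (m + n))).
  by rewrite !addrA !subrK.
rewrite rmorphM exprD.
apply: inVD; [|apply: inVD].
- rewrite -mulrBr -/v.
  have -> : r = u + iota a * x ^+ m by rewrite /u subrK.
  rewrite mulrDl -mulrA; apply: inVD; first exact: inV_mul.
  by apply: inV_iota; apply: inV_xpow.
- rewrite -mulrBl -/u mulrA; apply: inV_widen (inV_rxpow n (inV_riota b Hr)).
  by [].
- have -> : iota a * x ^+ m * (iota b * x ^+ n) - iota a * iota (iter m sigma b) * (x ^+ m * x ^+ n)
    = iota a * (w * x ^+ n) by rewrite /w mulrBl mulrBr !mulrA.
  by apply: inV_iota; apply: inV_rxpow.
Qed.


Lemma mulD_nz (a b : D) : a != 0 -> b != 0 -> a * b != 0.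
Proof.
move=> anz bnz; apply/eqP => ab0; move/eqP: bnz; apply.
by rewrite -(mulKr (hD anz) b) ab0 mulr0.
Qed.

Lemma iter_nz k (b : D) : b != 0 -> iter k sigma b != 0.
Proof.
move=> bnz; elim: k => [|k IH] //=; apply/eqP => H; move/eqP: IH; apply.
apply: (bij_inj hsig); by rewrite H rmorph0.
Qed.

Lemma iter_surj k (y : D) : exists a, iter k sigma a = y.
Proof.
case: hsig => g c1 c2; exists (iter k g y); elim: k => [|k IH] //.
by rewrite iterSr /= c2.
Qed.

Lemma LT_mul_nz r a m s b n : LT r a m -> a != 0 -> LT s b n -> b != 0 ->
  LT (r * s) (a * iter m sigma b) (m + n) /\ a * iter m sigma b != 0.
Proof.
move=> H1 a1 H2 b2; split; first exact: LT_mul.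
by apply: mulD_nz => //; apply: iter_nz.
Qed.

Lemma mulR_nz (r s : R) : r != 0 -> s != 0 -> r * s != 0.
Proof.
move=> rnz snz; case: (LT_exists rnz) => a [m [a1 H1]].
case: (LT_exists snz) => b [n [b2 H2]].
case: (LT_mul_nz H1 a1 H2 b2) => H3 H4; exact: LT_ne0 H3 H4.
Qed.

Lemma mulIR (r s t : R) : r != 0 -> r * s = r * t -> s = t.
Proof.
move=> rnz E; apply/eqP; rewrite -subr_eq0; apply/negPn/negP => nz.
by move: (mulR_nz rnz nz); rewrite mulrBr E subrr eqxx.
Qed.

Lemma mulRI (r s t : R) : r != 0 -> s * r = t * r -> s = t.
Proof.
move=> rnz E; apply/eqP; rewrite -subr_eq0; apply/negPn/negP => nz.
by move: (mulR_nz nz rnz); rewrite mulrBl E subrr eqxx.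
Qed.

Lemma ldiv f b n g : LT f b n -> b != 0 -> exists q, inV n (g - q * f).
Proof.
move=> Hf bnz; case: (inV_all g) => k; elim: k g => [|k IH] g Hg.
  by exists 0; rewrite mul0r subr0; apply: inV_widen Hg.
case: (leqP k.+1 n) => [le|lt].
  by exists 0; rewrite mul0r subr0; apply: inV_widen Hg.
move/inVS: Hg => [u [d [Hu Hg]]].
set j := (k - n)%N.
have jn : (j + n)%N = k by rewrite subnK // -ltnS.
set al := d * (iter j sigma b)^-1.
have H := LT_mul (LT_mono al j) Hf.
rewrite /al mulrVK in H; last by apply: hD; apply: iter_nz.
rewrite jn in H.
case: (IH (g - iota al * x ^+ j * f)) => [|q Hq].
  have -> : g - iota al * x ^+ j * f = u - (iota al * x ^+ j * f - iota d * x ^+ k).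
    by rewrite Hg opprB addrA.
  exact: inVB.
exists (iota al * x ^+ j + q); by rewrite mulrDl opprD addrA.
Qed.

Lemma rdiv f b n g : LT f b n -> b != 0 -> exists q, inV n (g - f * q).
Proof.
move=> Hf bnz; case: (inV_all g) => k; elim: k g => [|k IH] g Hg.
  by exists 0; rewrite mulr0 subr0; apply: inV_widen Hg.
case: (leqP k.+1 n) => [le|lt].
  by exists 0; rewrite mulr0 subr0; apply: inV_widen Hg.
move/inVS: Hg => [u [d [Hu Hg]]].
set j := (k - n)%N.
have jn : (n + j)%N = k by rewrite addnC subnK // -ltnS.
case: (iter_surj n (b^-1 * d)) => al Hal.
have H := LT_mul Hf (LT_mono al j).
rewrite Hal mulVKr ?jn in H; last exact: hD.
case: (IH (g - f * (iota al * x ^+ j))) => [|q Hq].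
  have -> : g - f * (iota al * x ^+ j) = u - (f * (iota al * x ^+ j) - iota d * x ^+ k).
    by rewrite Hg opprB addrA.
  exact: inVB.
exists (iota al * x ^+ j + q); by rewrite mulrDr opprD addrA.
Qed.


Lemma inRf0 (f : R) : inRf f 0.
Proof. by exists 0; rewrite mul0r. Qed.
Lemma inRff (f : R) : inRf f f.
Proof. by exists 1; rewrite mul1r. Qed.
Lemma inRfD (f r s : R) : inRf f r -> inRf f s -> inRf f (r + s).
Proof. by move=> [q ->] [q' ->]; exists (q + q'); rewrite mulrDl. Qed.
Lemma inRfN (f r : R) : inRf f r -> inRf f (- r).
Proof. by move=> [q ->]; exists (- q); rewrite mulNr. Qed.
Lemma inRfB (f r s : R) : inRf f r -> inRf f s -> inRf f (r - s).
Proof. by move=> H1 H2; apply: inRfD => //; apply: inRfN. Qed.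
Lemma inRfM (f r s : R) : inRf f r -> inRf f (s * r).
Proof. by move=> [q ->]; exists (s * q); rewrite mulrA. Qed.
Lemma inRfq (f q : R) : inRf f (q * f).
Proof. by exists q. Qed.
Lemma inRf_mulr (f r t : R) : inRf f r -> inRf f (f * t) -> inRf f (r * t).
Proof. by move=> [q ->] H; rewrite -mulrA; apply: inRfM. Qed.

Lemma one_LT : LT 1 1 0.
Proof. by rewrite /LT rmorph1 expr0 mulr1 subrr; exact: inV0. Qed.

Lemma one_notin f c n : LT f c n -> c != 0 -> (0 < n)%N -> ~ inRf f 1.
Proof.
move=> Hf cnz npos [q Hq].
have qnz : q != 0 by apply/eqP => q0; move: Hq; rewrite q0 mul0r => /eqP; rewrite oner_eq0.
case: (LT_exists qnz) => a [m [anz Ha]].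
case: (LT_mul_nz Ha anz Hf cnz) => H1 H2.
rewrite -Hq in H1.
have := LT_uniq H1 H2 one_LT (oner_neq0 _).
by move=> /eqP; rewrite addn_eq0 => /andP [_ /eqP n0]; move: npos; rewrite n0.
Qed.

Lemma bezout f c n : LT f c n -> c != 0 -> skew_irreducible iota f ->
  forall s, ~ inRf f s -> exists al be, al * s + be * f = 1.
Proof.
move=> Hf cnz irr s ns.
have fnz : f != 0 := LT_ne0 Hf cnz.
have main : forall k h, inV k h -> h != 0 -> (exists al be, h = al * s + be * f) ->
    exists al be, al * s + be * f = 1.
  elim=> [|k IH] h Hh hnz [al [be Hl]].
    by move: hnz; rewrite (inV0_eq Hh) eqxx.
  case: (LT_exists hnz) => a [m [anz Ha]].
  have mk : (m <= k)%N by rewrite -ltnS; exact: LT_lt Ha anz Hh.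
  case: (ldiv s Ha anz) => q Hq.
  case: (eqVneq (s - q * h) 0) => [E|nz]; last first.
    apply: (IH (s - q * h)) => //; first exact: inV_widen mk Hq.
    exists (1 - q * al), (- (q * be)).
    by rewrite Hl mulrDr !mulrA mulrBl mul1r mulNr opprD addrA.
  case: (ldiv f Ha anz) => q' Hq'.
  case: (eqVneq (f - q' * h) 0) => [E'|nz']; last first.
    apply: (IH (f - q' * h)) => //; first exact: inV_widen mk Hq'.
    exists (- (q' * al)), (1 - q' * be).
    rewrite Hl mulrDr !mulrA mulrBl mul1r mulNr opprD !addrA; congr (_ - _); by rewrite addrC.
  move/subr0_eq: E => E; move/subr0_eq: E' => E'.
  case: (irr _ _ E') => [[d Hd]|[d Hd]].
    have dnz : d != 0 by apply/eqP => d0; move: fnz; rewrite E' Hd d0 rmorph0 mul0r eqxx.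
    exfalso; apply: ns; exists (q * iota d^-1).
    by rewrite E' Hd -mulrA (mulrA (iota _)) -rmorphM mulVr ?rmorph1 ?mul1r //; apply: hD.
  have dnz : d != 0 by apply/eqP => d0; move: hnz; rewrite Hd d0 rmorph0 eqxx.
  exists (iota d^-1 * al), (iota d^-1 * be).
  by rewrite -!mulrA -mulrDr -Hl Hd -rmorphM mulVr ?rmorph1 //; apply: hD.
apply: (main n.+1 f (LT_inV Hf) fnz); exists 0, 1; by rewrite mul0r add0r mul1r.
Qed.

Lemma dir1 f c n : LT f c n -> c != 0 -> (0 < n)%N -> skew_irreducible iota f ->
  End_quot_is_skew_field f.
Proof.
move=> Hf cnz npos irr; split.
  move=> E; apply: (one_notin Hf cnz npos); have := E 1; by rewrite subr0.
move=> g [gwd gadd glin] gnz.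
set u := g 1.
have glin1 : forall s, inRf f (g s - s * u).
  by move=> s; have := glin s 1; rewrite mulr1.
have unot : ~ inRf f u.
  move=> Hu; apply: gnz => s; rewrite subr0.
  have -> : g s = (g s - s * u) + s * u by rewrite subrK.
  by apply: inRfD => //; apply: inRfM.
have g0 : inRf f (g 0).
  have := gadd 0 0; rewrite addr0 opprD addrA subrr add0r => H.
  by have := inRfN H; rewrite opprK.
have fu : inRf f (f * u).
  have -> : f * u = - (g f - f * u) + (g f - g 0) + g 0.
    by rewrite opprB !addrA subrK addrNK.
  apply: inRfD => //; apply: inRfD; first by apply: inRfN; apply: glin1.
  by apply: gwd; rewrite subr0; apply: inRff.
have ker : forall t, inRf f (t * u) -> inRf f t.
  move=> t Ht; apply: NNPP => nt.
  case: (bezout Hf cnz irr nt) => al [be E].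
  apply: unot; have -> : u = al * (t * u) + be * f * u by rewrite mulrA -mulrDl E mul1r.
  by apply: inRfD; [apply: inRfM | rewrite -mulrA; apply: inRfM].
case: (bezout Hf cnz irr unot) => al [be E].
have E' : al * u = 1 - be * f by rewrite -E addrK.
have fal : inRf f (f * al).
  apply: ker; rewrite -mulrA E' mulrBr mulr1 mulrA; apply: inRfB; [exact: inRff | exact: inRfq].
exists (fun s => s * al); split.
- split.
  + by move=> s s' Hs; rewrite -mulrBl; apply: inRf_mulr.
  + by move=> s s'; rewrite mulrDl subrr; apply: inRf0.
  + by move=> r s; rewrite mulrA subrr; apply: inRf0.
- move=> s /=.
  have -> : g (s * al) - s = (g (s * al) - s * al * u) - (s * be) * f.
    by rewrite -(mulrA s al) E' mulrBr mulr1 !mulrA opprB addrA addrAC addrK.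
  by apply: inRfB; [exact: glin1 | exact: inRfq].
- move=> s /=.
  have -> : g s * al - s = (g s - s * u) * al + s * (u * al - 1).
    by rewrite mulrBl mulrBr mulr1 !mulrA addrA subrK.
  apply: inRfD; first exact: inRf_mulr.
  apply: inRfM; apply: ker.
  have -> : (u * al - 1) * u = - (u * be * f).
    by rewrite mulrBl mul1r -(mulrA u al u) E' mulrBr mulr1 addrAC subrr add0r !mulrA.
  by apply: inRfN; exact: inRfq.
Qed.


Lemma notD_LT r : ~ (exists d, r = iota d) -> exists e m, [/\ e != 0, LT r e m & (0 < m)%N].
Proof.
move=> nd.
have rnz : r != 0 by apply/eqP => r0; apply: nd; exists 0; rewrite r0 rmorph0.
case: (LT_exists rnz) => e [m [enz He]]; exists e, m; split => //.
case: m He => // He; exfalso; apply: nd; exists e.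
by move: (inV0_eq He); rewrite expr0 mulr1 => /subr0_eq.
Qed.

Lemma dir2 f c n : LT f c n -> c != 0 -> (0 < n)%N -> bounded f ->
  End_quot_is_skew_field f -> skew_irreducible iota f.
Proof.
move=> Hf cnz npos [r0 [r0nz Hr0]] [_ Hend] a b Eab.
case: (classic (exists d, a = iota d)) => [|na]; first by left.
case: (classic (exists d, b = iota d)) => [|nb]; first by right.
exfalso.
case: (notD_LT na) => ea [ma [eanz Ha mapos]].
case: (notD_LT nb) => eb [mb [ebnz Hb mbpos]].
have bnz : b != 0 := LT_ne0 Hb ebnz.
have bnot : ~ inRf f b.
  move=> [q Hq]; rewrite Eab mulrA in Hq.
  have qnz : q != 0 by apply/eqP => q0; move: bnz; rewrite Hq q0 !mul0r eqxx.
  case: (LT_exists qnz) => eq [mq [eqnz Hq']].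
  case: (LT_mul_nz Hq' eqnz Ha eanz) => H1 H2.
  case: (LT_mul_nz H1 H2 Hb ebnz) => H3 H4.
  rewrite -Hq in H3.
  have := LT_uniq H3 H4 Hb ebnz => /eqP; rewrite -{2}(add0n mb) eqn_add2r addn_eq0.
  by move=> /andP [_ /eqP m0]; move: mapos; rewrite m0.
have P1 : forall t, inRf f (b * t) -> inRf f t.
  move=> t Hbt; apply: NNPP => nt.
  have ft : forall s, inRf f s -> inRf f (s * t).
    move=> s [q ->]; have -> : q * f * t = q * a * (b * t) by rewrite Eab !mulrA.
    exact: inRfM.
  case: (Hend (fun s => s * t)).
  - split.
    + by move=> s s' H; rewrite -mulrBl; apply: ft.
    + by move=> s s'; rewrite mulrDl subrr; apply: inRf0.
    + by move=> r s; rewrite mulrA subrr; apply: inRf0.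
  - by move=> E; apply: nt; have := E 1; rewrite mul1r subr0.
  move=> h [[hwd hadd hlin] _ hg].
  have h0 : inRf f (h 0).
    have := hadd 0 0; rewrite addr0 opprD addrA subrr add0r => H.
    by have := inRfN H; rewrite opprK.
  apply: bnot.
  have -> : b = - (h (b * t) - b) + (h (b * t) - h 0) + h 0.
    by rewrite opprB !addrA subrK addrNK.
  apply: inRfD => //; apply: inRfD; first by apply: inRfN; apply: (hg b).
  by apply: hwd; rewrite subr0.
pose J y := forall s, inRf f (y * s).
have Jl : forall q y, J y -> J (q * y) by move=> q y Hy s; rewrite -mulrA; apply: inRfM.
have Jr : forall y q, J y -> J (y * q) by move=> y q Hy s; rewrite -mulrA.
have JB : forall y y', J y -> J y' -> J (y - y') by move=> y y' H H' s; rewrite mulrBl; apply: inRfB.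
case: (@ex_min (fun k => exists y, [/\ J y, y != 0 & inV k y])).
  case: (inV_all r0) => k Hk; exists k, r0; split => //.
move=> k0 [[y0 [Jy0 y0nz Hk0]] min].
case: (LT_exists y0nz) => c0 [m0 [c0nz Hc0]].
have m0k0 : (m0 < k0)%N := LT_lt Hc0 c0nz Hk0.
have JL : forall y, J y -> exists q, y = q * y0.
  move=> y Jy; case: (ldiv y Hc0 c0nz) => q Hq; exists q.
  case: (eqVneq (y - q * y0) 0) => [/subr0_eq //|nz].
  exfalso; apply: (min m0 m0k0); exists (y - q * y0); split => //.
  by apply: JB => //; apply: Jl.
have JR : forall y, J y -> exists q, y = y0 * q.
  move=> y Jy; case: (rdiv y Hc0 c0nz) => q Hq; exists q.
  case: (eqVneq (y - y0 * q) 0) => [/subr0_eq //|nz].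
  exfalso; apply: (min m0 m0k0); exists (y - y0 * q); split => //.
  by apply: JB => //; apply: Jr.
have [c1 Hc1] : inRf f y0 by have := Jy0 1; rewrite mulr1.
rewrite Eab mulrA in Hc1; set cc := c1 * a in Hc1.
case: (JL (y0 * b) (Jr _ _ Jy0)) => t Ht.
have cbt : cc * b = t * cc.
  apply: (mulRI bnz); by rewrite -Hc1 Ht Hc1 mulrA.
case: (JR (cc * y0) (Jl _ _ Jy0)) => w Hw.
have bw : b * w = y0.
  apply: (mulIR y0nz).
  by rewrite mulrA Ht -mulrA -Hw mulrA -cbt -Hc1.
have Jw : J w by move=> s; apply: P1; rewrite mulrA bw; apply: Jy0.
have wnz : w != 0 by apply/eqP => w0; move: y0nz; rewrite -bw w0 mulr0 eqxx.
case: (LT_exists wnz) => ew [mw [ewnz Hw']].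
case: (LT_mul_nz Hb ebnz Hw' ewnz) => H1 H2.
rewrite bw in H1.
have E := LT_uniq H1 H2 Hc0 c0nz.
apply: (min mw.+1).
  apply: leq_ltn_trans m0k0; rewrite -E -addn1 addnC leq_add2r //.
exists w; split => //; exact: LT_inV Hw'.
Qed.

End Skew.

Unset Implicit Arguments.

Theorem mainTheorem7 (D : unitRingType) (R : nzRingType)
  (sigma : {rmorphism D -> D}) (delta : D -> D)
  (iota : {rmorphism D -> R}) (x : R)
  (hD : is_skew_field D) (hsigma : bijective sigma)
  (hdelta : is_sigma_derivation sigma delta)
  (hR : is_skew_poly_ring sigma delta iota x)
  (f : R) (hdeg : exists n, (0 < n)%N /\ has_degree iota x f n)
  (hbd : bounded f) :
  skew_irreducible iota f <-> End_quot_is_skew_field f.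
Proof.
case: hdeg => n [npos [c [Hsz Hcn Hf]]].
have HLT : LT iota x f c`_n n.
  rewrite /LT Hf /spoly Hsz big_ord_recr /= addrK.
  by exists (nth 0 c).
split.
- exact: (dir1 hD hsigma hR HLT Hcn npos).
- exact: (dir2 hD hsigma hR HLT Hcn npos hbd).
Qed.
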